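(* Let $M$ be the allocation output by the online greedy algorithm for Model 2 and $N$ an optimal offline allocation, and fix a day $d_i$ with $|X_i|=|Y_i|+z$ for some $z>0$. Let $\rho$ be a path component of the symmetric difference $M_i\oplus N_i$ in $G_i$ that starts and ends with an edge of $N_i$, and let $c_k$ be a category that is an endpoint of $\rho$. Then the overall quota $q_k$ of $c_k$ is exhausted by the algorithm on or before day $d_i$, i.e. $M$ allocates exactly $q_k$ agents to category $c_k$ on days $d_1,\dots,d_i$.
   Context: Model 2: finite sets of agents $A$, categories $C$ and days $D=\{d_1,\dots,d_T\}$; each agent is eligible for a subset of categories; daily supply $s_i$ for day $d_i$; daily quota $q_{ik}$ for category $c_k$ on day $d_i$; overall quota $q_k$ for category $c_k$; each agent $a_j$ has a priority factor $\alpha_j>0$ and a set of available days; discount factor $\delta\in(0,1)$. An allocation maps each agent to a pair (eligible category, available day) or to $\emptyset$, with at most $q_{ik}$ agents getting $(c_k,d_i)$, at most $s_i$ agents getting day $d_i$, and at most $q_k$ agents getting category $c_k$ in total; agent $a_j$ allocated on day $d_i$ has utility $\alpha_j\delta^{i-1}$, and an optimal offline allocation maximizes total utility. The online greedy algorithm for Model 2: keep $r_k$, initially $q_k$; on each day $d_i$, let $A_i$ be the agents available on $d_i$ not yet allocated; form the bipartite graph $H_i$ between $A_i$ and $C$ with an edge $(a_j,c_k)$ when $a_j$ is eligible for $c_k$, of weight $\alpha_j\delta^{i-1}$, agents of capacity $1$ and $c_k$ of capacity $\min(q_{ik},r_k)$; compute a maximum-weight $b$-matching of size at most $s_i$, allocate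 accordingly on day $d_i$, and decrease $r_k$ by the number of agents allocated to $c_k$. An agent allocated by $N$ is of Type 1 if $M$ allocates it on a strictly earlier day than $N$; every other agent allocated by $N$ is of Type 2. $X_i$ is the set of Type 2 agents allocated by $N$ on day $d_i$ and $Y_i$ the set of agents allocated by $M$ on day $d_i$. $N_i$ is the set of edges $(a,c_k)$ with $a\in X_i$ and $N(a)=(c_k,d_i)$, $M_i$ the set of edges $(a,c_k)$ with $a\in Y_i$ and $M(a)=(c_k,d_i)$, and $G_i$ is the bipartite graph with parts $X_i\cup Y_i$ and $C$ and edge set $N_i\cup M_i$. *)

(* Defs.v *)
From HB Require Import structures.
From mathcomp Require Import all_boot all_order all_algebra.
Set Implicit Arguments. Unset Strict Implicit. Unset Printing Implicit Defensive.
Import Order.TTheory GRing.Theory Num.Theory.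
Local Open Scope ring_scope.

(* Days d_1,...,d_T are represented by 'I_T, day d_{i+1} being the ordinal i
   (so the utility factor delta^(i-1) of the paper becomes delta ^+ i).
   elig a c : agent a eligible for category c;  avail a d : a available on d;
   s d : daily supply;  qd d c : daily quota of c on d;  q c : overall quota.
   An allocation maps each agent to None (= emptyset) or Some (c, d). *)

Section Model2.
Variables (A C : finType) (T : nat).
Variables (elig : A -> C -> bool) (avail : A -> 'I_T -> bool).
Variables (s : 'I_T -> nat) (qd : 'I_T -> C -> nat) (q : C -> nat).

Definition allocation := A -> option (C * 'I_T).

Definition valid_alloc (x : allocation) : Prop :=
  [/\ (forall a c d, x a = Some (c, d) -> elig a c && avail a d),
      (forall d c, (#|[set a | x a == Some (c, d)]| <= qd d c)%N),
      (forall d, (#|[set a | [exists c, x a == Some (c, d)]]| <= s d)%N) &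
      (forall c, (#|[set a | [exists d, x a == Some (c, d)]]| <= q c)%N)].

Variables (R : realFieldType) (alpha : A -> R) (delta : R).

Definition utility (x : allocation) : R :=
  \sum_(a : A) match x a with Some (_, d) => alpha a * delta ^+ d | None => 0 end.

Definition optimal_alloc (x : allocation) : Prop :=
  valid_alloc x /\ forall y, valid_alloc y -> utility y <= utility x.

Definition used_before (M : allocation) (i : 'I_T) (c : C) : nat :=
  #|[set a | [exists d : 'I_T, (d < i)%N && (M a == Some (c, d))]]|.

Definition remaining (M : allocation) (i : 'I_T) (c : C) : nat :=
  (q c - used_before M i c)%N.

Definition avail_agents (M : allocation) (i : 'I_T) : {set A} :=
  [set a | avail a i &&
     ~~ [exists c, exists d : 'I_T, (d < i)%N && (M a == Some (c, d))]].

(* b-matchings of H_i of size at most s_i: each agent (capacity 1) is mapped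
   to at most one category; category c has capacity min(qd i c, r_c). *)
Definition feasible_bmatching (M : allocation) (i : 'I_T) (b : A -> option C)
  : Prop :=
  [/\ (forall a c, b a = Some c -> (a \in avail_agents M i) && elig a c),
      (forall c, (#|[set a | b a == Some c]| <= minn (qd i c) (remaining M i c))%N) &
      (#|[set a | b a != None]| <= s i)%N].

Definition bm_weight (i : 'I_T) (b : A -> option C) : R :=
  \sum_(a : A) if b a is Some _ then alpha a * delta ^+ i else 0.

Definition day_matching (M : allocation) (i : 'I_T) : A -> option C :=
  fun a => match M a with
           | Some (c, d) => if d == i then Some c else None
           | None => None end.

(* M is a possible output of the online greedy algorithm: on every day, the
   allocation of that day is a maximum-weight b-matching of H_i (any tie
   breaking allowed). *)
Definition greedy_output (M : allocation) : Prop :=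
  forall i : 'I_T,
    feasible_bmatching M i (day_matching M i) /\
    forall b, feasible_bmatching M i b ->
      bm_weight i b <= bm_weight i (day_matching M i).

Definition type1 (M N : allocation) (a : A) : bool :=
  [exists c, exists d : 'I_T, exists c', exists d' : 'I_T,
     [&& N a == Some (c, d), M a == Some (c', d') & (d' < d)%N]].

Definition Xset (M N : allocation) (i : 'I_T) : {set A} :=
  [set a | [exists c, N a == Some (c, i)] && ~~ type1 M N a].

Definition Yset (M : allocation) (i : 'I_T) : {set A} :=
  [set a | [exists c, M a == Some (c, i)]].

Definition Nedges (M N : allocation) (i : 'I_T) : {set A * C} :=
  [set e | (e.1 \in Xset M N i) && (N e.1 == Some (e.2, i))].

Definition Medges (M : allocation) (i : 'I_T) : {set A * C} :=
  [set e | (e.1 \in Yset M i) && (M e.1 == Some (e.2, i))].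

(* edge membership for vertices of the bipartite graph (agents inl, categories inr) *)
Definition edge_in (S : {set A * C}) (u v : A + C) : bool :=
  match u, v with
  | inl a, inr c => (a, c) \in S
  | inr c, inl a => (a, c) \in S
  | _, _ => false
  end.

Definition symdiff (E1 E2 : {set A * C}) : {set A * C} :=
  (E1 :\: E2) :|: (E2 :\: E1).

(* rho = v0 :: p is a path component of the graph with edge set E:
   a simple path with at least one edge, whose every edge is in E, and such
   that every E-edge incident to a vertex of rho is an edge of rho. *)
Definition path_component (E : {set A * C}) (v0 : A + C) (p : seq (A + C))
  : Prop :=
  [/\ p != [::], uniq (v0 :: p), path (edge_in E) v0 p &
      forall v w, v \in v0 :: p -> edge_in E v w ->
        ((v, w) \in zip (v0 :: p) p) || ((w, v) \in zip (v0 :: p) p)].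

Definition rho_edge (v0 : A + C) (p : seq (A + C)) (j : nat) : (A + C) * (A + C) :=
  (nth v0 (v0 :: p) j, nth v0 (v0 :: p) j.+1).

Definition alternating (S : {set A * C}) (v0 : A + C) (p : seq (A + C)) : Prop :=
  forall j, (j.+2 <= size p)%N ->
    edge_in S (rho_edge v0 p j).1 (rho_edge v0 p j).2 =
    ~~ edge_in S (rho_edge v0 p j.+1).1 (rho_edge v0 p j.+1).2.

End Model2.

(* Main.v *)
Require Import Defs.
From HB Require Import structures.
From mathcomp Require Import all_boot all_order all_algebra.
Import Order.TTheory GRing.Theory Num.Theory.
Set Implicit Arguments. Unset Strict Implicit. Unset Printing Implicit Defensive.

Section PathFacts.
Variables (A C : finType).
Variables (E Ni : {set A * C}) (v0 : A + C) (p : seq (A + C)).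
Hypothesis hrho : path_component E v0 p.
Hypothesis halt : alternating Ni v0 p.
Hypothesis hstart : edge_in Ni v0 (head v0 p).
Hypothesis hend : edge_in Ni (last v0 (belast v0 p)) (last v0 p).

Local Notation vs := (v0 :: p).
Local Notation n := (size p).
Local Notation x j := (nth v0 (v0 :: p) j).

Definition isA (u : A + C) := if u is inl _ then true else false.

Lemma edge_in_sym (S : {set A * C}) u w : edge_in S u w = edge_in S w u.
Proof. by case: u => [?|?]; case: w. Qed.

Lemma edge_bip (S : {set A * C}) u w : edge_in S u w -> isA u != isA w.
Proof. by case: u => [?|?]; case: w. Qed.

Lemma p_nil : p != [::].
Proof. by case: hrho. Qed.

Lemma xpath j : j < n -> edge_in E (x j) (x j.+1).
Proof. by case: hrho => _ _ /(pathP v0) H _ /H. Qed.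

Lemma xN j : j < n -> edge_in Ni (x j) (x j.+1) = ~~ odd j.
Proof.
elim: j => [|j IH] Hj.
  move: hstart p_nil; rewrite /=; case: (p) => [|y s] //= -> //.
have H := halt Hj; rewrite /rho_edge IH ?(ltnW Hj) // in H.
rewrite oddS; move: H; case: (edge_in _ _ _) => /=; case: (odd j) => //.
Qed.

Lemma last_belast_nth (T0 : Type) (x0 : T0) (s : seq T0) :
  last x0 (belast x0 s) = nth x0 (x0 :: s) (size s).-1.
Proof.
case/lastP: s => [|s y] //; rewrite belast_rcons size_rcons /=.
case: s => [|a s] //=.
rewrite -rcons_cons nth_rcons /= ltnSn.
by rewrite -[size s]/((size (a :: s)).-1) nth_last.
Qed.

Lemma nodd : odd n.
Proof.
have hp := p_nil.
have n0 : 0 < n by case: (p) hp.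
move: hend; rewrite last_belast_nth.
have -> : last v0 p = x n.-1.+1.
  by rewrite prednK // -[n]/((size vs).-1) nth_last.
have Hm : n.-1 < n by rewrite prednK.
rewrite (xN Hm) => /negPn.
by rewrite -{2}(prednK n0) /= => /negPn.
Qed.

Lemma xtype j : j <= n -> isA (x j) = isA v0 (+) odd j.
Proof.
elim: j => [|j IH] Hj; first by rewrite addbF.
have := edge_bip (xpath Hj); rewrite IH ?(ltnW Hj) //= .
by case: (isA (x j.+1)); case: (isA v0); case: (odd j).
Qed.

Lemma zipP u w : (u, w) \in zip vs p -> exists2 m, m < n & u = x m /\ w = x m.+1.
Proof.
have Hz : size (zip vs p) = n by rewrite size_zip /= (minn_idPr (leqnSn _)).
case/(nthP (v0, v0)) => m; rewrite Hz => Hm.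
rewrite nth_zip_cond Hz Hm /= => [[<- <-]].
by exists m.
Qed.

Lemma uniq_vs : uniq vs. Proof. by case: hrho. Qed.

Lemma xinj j k : j <= n -> k <= n -> x j = x k -> j = k.
Proof.
move=> Hj Hk H; apply/eqP; rewrite -(nth_uniq v0 _ _ uniq_vs) ?H //.
Qed.

Lemma compo v w : v \in vs -> edge_in E v w ->
  ((v, w) \in zip vs p) || ((w, v) \in zip vs p).
Proof. by case: hrho => _ _ _; apply. Qed.

Lemma nbr j w : j <= n -> edge_in E (x j) w ->
  (j < n /\ w = x j.+1) \/ (0 < j /\ w = x j.-1).
Proof.
move=> Hj He; have := compo (mem_nth v0 _) He; rewrite /= ltnS => /(_ Hj).
case/orP => /zipP [m Hm [H1 H2]].
  left; have := xinj Hj (ltnW Hm) H1 => ->; by [].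
right; have := xinj Hj Hm H2 => ->; by [].
Qed.

Lemma inzip_mem u w : ((u, w) \in zip vs p) -> (u \in vs) && (w \in vs).
Proof.
case/zipP => m Hm [-> ->]; rewrite !mem_nth //= ltnS ?Hm //; exact: ltnW.
Qed.

Lemma memP u : reflect (exists2 j, j <= n & u = x j) (u \in vs).
Proof.
apply: (iffP (nthP v0)) => [[j Hj <-]|[j Hj ->]]; by exists j.
Qed.



Lemma predE j : 0 < j -> x j = x j.-1.+1.
Proof. by move=> Hj; rewrite prednK. Qed.

Lemma hasN j : j <= n -> exists2 w, edge_in Ni (x j) w & edge_in E (x j) w.
Proof.
move=> Hj; case Ho: (odd j).
  have j0 : 0 < j by case: j Ho {Hj}.
  have Hj' : j.-1 < n by rewrite prednK.
  exists (x j.-1); rewrite (predE j0) edge_in_sym.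
    rewrite xN //; by move: Ho; rewrite -{1}(prednK j0) /= => ->.
  exact: xpath.
have Hj' : j < n.
  by rewrite ltn_neqAle Hj andbT; apply/eqP => E0; move: Ho; rewrite E0 nodd.
by exists (x j.+1); rewrite ?xN ?xpath ?Ho.
Qed.

Lemma endpt j : (j == 0) || (j == n) ->
  exists w, [/\ edge_in Ni (x j) w, edge_in E (x j) w &
     forall w', edge_in E (x j) w' -> w' = w].
Proof.
have n0 : 0 < n by move: p_nil; case: (p).
case/orP => /eqP ->.
  exists (x 1); split; [by rewrite xN | by rewrite xpath |].
  by move=> w' /(nbr (leq0n _)) [[_ ->]|[]].
exists (x n.-1).
have Hm : n.-1 < n by rewrite prednK.
split.
- rewrite (predE n0) edge_in_sym xN //.
  move: nodd; rewrite -{1}(prednK n0) /=; by case: (odd _).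
- by rewrite (predE n0) edge_in_sym xpath.
- by move=> w' /(nbr (leqnn _)) [[]|[_ ->]]; rewrite ?ltnn.
Qed.

Lemma interior j : 0 < j < n ->
  exists wN, exists2 wM,
   [/\ edge_in Ni (x j) wN, edge_in E (x j) wN, edge_in E (x j) wM,
       ~~ edge_in Ni (x j) wM & wM \in vs] &
   forall w, edge_in E (x j) w -> edge_in Ni (x j) w -> w = wN.
Proof.
case/andP=> j0 Hj.
have Hj' : j.-1 < n by rewrite prednK // ltnW.
have Hm : x j.+1 \in vs by rewrite mem_nth.
have Hp : x j.-1 \in vs by rewrite mem_nth //= ltnS ltnW.
have Ep : edge_in Ni (x j) (x j.-1) = odd j.
  rewrite {1}(predE j0) edge_in_sym xN // -{2}(prednK j0) /=.
  by case: (odd _).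
have Epe : edge_in E (x j) (x j.-1) by rewrite {1}(predE j0) edge_in_sym xpath.
case Ho: (odd j).
  exists (x j.-1); exists (x j.+1); first by rewrite Ep xN ?xpath ?Ho.
  move=> w /(nbr (ltnW Hj)) [[_ ->]|[_ ->]] //; by rewrite xN ?Ho.
exists (x j.+1); exists (x j.-1); first by rewrite Ep xN ?xpath ?Ho.
move=> w /(nbr (ltnW Hj)) [[_ ->]|[_ ->]] //; by rewrite Ep Ho.
Qed.

End PathFacts.

Section Basic.
Variables (A C : finType) (T : nat).

Lemma edge_inr (S : {set A * C}) c w : edge_in S (inr c) w -> exists2 a, w = inl a & (a, c) \in S.
Proof. by case: w => // a H; exists a. Qed.

Lemma edge_inl (S : {set A * C}) a w : edge_in S (inl a) w -> exists2 c, w = inr c & (a, c) \in S.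
Proof. by case: w => // c H; exists c. Qed.

Lemma dmP (M : allocation A C T) k a c :
  (day_matching M k a == Some c) = (M a == Some (c, k)).
Proof.
rewrite /day_matching; case: (M a) => [[c' d]|] //.
case: (d =P k) => [->|/eqP Hd].
  by apply/eqP/eqP => [[->]|[->]].
apply/esym/negP => /eqP [_ E]; move: Hd; by rewrite E eqxx.
Qed.

Lemma dmset (M : allocation A C T) k c :
  [set a | day_matching M k a == Some c] = [set a | M a == Some (c, k)].
Proof. by apply/setP => a; rewrite !inE dmP. Qed.

Lemma dmY (M : allocation A C T) k :
  [set a | day_matching M k a != None] = Yset M k.
Proof.
apply/setP => a; rewrite !inE /day_matching.
case: (M a) => [[c d]|]; last by apply/esym/existsP => [[c]].
case: (d =P k) => [->|/eqP Hd] /=.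
  by apply/esym/existsP; exists c.
by apply/esym/existsP => [[c' /eqP [_ E]]]; move: Hd; rewrite E eqxx.
Qed.

Lemma inMi (M : allocation A C T) k a c : ((a, c) \in Medges M k) = (M a == Some (c, k)).
Proof.
rewrite !inE /=; apply/andP/idP => [[]//|H]; split=> //.
by apply/existsP; exists c.
Qed.

Lemma inNi (M N : allocation A C T) k a c :
  ((a, c) \in Nedges M N k) = (a \in Xset M N k) && (N a == Some (c, k)).
Proof. by rewrite !inE. Qed.

Lemma inE2 (E1 E2 : {set A * C}) e : (e \in symdiff E1 E2) = ((e \in E1) != (e \in E2)).
Proof. by rewrite /symdiff in_setU !in_setD; case: (e \in E1); case: (e \in E2). Qed.

Lemma edgeE (E1 E2 : {set A * C}) u w : edge_in (symdiff E1 E2) u w ->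
  edge_in E1 u w = ~~ edge_in E2 u w.
Proof. by case: u => [a|c]; case: w => [a'|c'] //=; rewrite inE2; case: (_ \in E1); case: (_ \in E2). Qed.

Definition ubn (M : allocation A C T) (k : nat) (c : C) : nat :=
  #|[set a | [exists d : 'I_T, (d < k)%N && (M a == Some (c, d))]]|.

Lemma ubn_step (M : allocation A C T) (k : 'I_T) c :
  ubn M k.+1 c = ubn M k c + #|[set a | M a == Some (c, k)]|.
Proof.
rewrite /ubn -cardsUI.
have -> : [set a : A | [exists d : 'I_T, (d < k)%N && (M a == Some (c, d))]]
   :&: [set a | M a == Some (c, k)] = set0.
  apply/setP => a; rewrite !inE; apply/negP => /andP [/existsP [d /andP [Hd /eqP E1]] /eqP].
  by rewrite E1 => [[E2]]; move: Hd; rewrite E2 ltnn.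
rewrite cards0 addn0; apply: eq_card => a; rewrite !inE.
apply/existsP/orP => [[d /andP [Hd HM]]|[/existsP [d /andP [Hd HM]]| HM]].
- move: Hd; rewrite ltnS leq_eqVlt => /orP [/eqP Ed|Hd].
    by right; rewrite (_ : k = d) //; apply/val_inj.
  by left; apply/existsP; exists d; rewrite Hd.
- by exists d; rewrite HM ltnS ltnW.
- by exists k; rewrite HM ltnS leqnn.
Qed.

End Basic.

Lemma ubn_le (A C : finType) (T : nat)
  (elig : A -> C -> bool) (avail : A -> 'I_T -> bool)
  (s : 'I_T -> nat) (qd : 'I_T -> C -> nat) (q : C -> nat)
  (R : realFieldType) (alpha : A -> R) (delta : R) (M : allocation A C T)
  (hM : greedy_output elig avail s qd q alpha delta M) c k :
  (k <= T)%N -> (ubn M k c <= q c)%N.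
Proof.
elim: k => [|k IH] Hk.
  have -> : ubn M 0 c = 0%N.
    by apply/eqP; rewrite cards_eq0; apply/eqP/setP => a; rewrite !inE; apply/existsP => [[d]].
  by [].
pose o := Ordinal Hk.
have := ubn_step M o c; rewrite /= => ->.
have [[_ H _] _] := hM o.
have := H c; rewrite dmset => /leq_trans/(_ (geq_minr _ _)).
rewrite /remaining /used_before -/(ubn M o c) /= => H2.
have IH' := IH (ltnW Hk).
by rewrite -(subnKC IH') leq_add2l.
Qed.

Local Open Scope ring_scope.

Section Main.
Variables (A C : finType) (T : nat)
  (elig : A -> C -> bool) (avail : A -> 'I_T -> bool)
  (s : 'I_T -> nat) (qd : 'I_T -> C -> nat) (q : C -> nat)
  (R : realFieldType) (alpha : A -> R) (delta : R).
Hypotheses (halpha : forall a, 0 < alpha a) (hdelta : 0 < delta < 1).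
Variables (M N : allocation A C T).
Hypotheses (hM : greedy_output elig avail s qd q alpha delta M)
  (hN : optimal_alloc elig avail s qd q alpha delta N).
Variables (i : 'I_T) (z : nat).
Hypotheses (hz : (0 < z)%N) (hXY : #|Xset M N i| = (#|Yset M i| + z)%N).
Variables (v0 : A + C) (p : seq (A + C)).
Hypotheses (hrho : path_component (symdiff (Medges M i) (Nedges M N i)) v0 p)
  (halt : alternating (Nedges M N i) v0 p)
  (hstart : edge_in (Nedges M N i) v0 (head v0 p))
  (hend : edge_in (Nedges M N i) (last v0 (belast v0 p)) (last v0 p)).
Variable ck : C.
Hypothesis hck : (v0 == inr ck) || (last v0 p == inr ck).

Local Notation Ni := (Nedges M N i).
Local Notation Mi := (Medges M i).
Local Notation E := (symdiff (Medges M i) (Nedges M N i)).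
Local Notation vs := (v0 :: p).
Local Notation n := (size p).
Local Notation x j := (nth v0 (v0 :: p) j).

Lemma ends : exists jk, exists jo, exists a',
  [/\ (jk == 0%N) || (jk == n), (jo == 0%N) || (jo == n), x jk = inr ck, x jo = inl a' &
      forall j, (j == 0%N) || (j == n) -> j = jk \/ j = jo].
Proof.
have Hn := nodd hrho halt hstart hend.
have Ht := xtype hrho (leqnn n); rewrite Hn addbT in Ht.
case/orP: hck => /eqP Hc.
  have Ha : isA (x n) by rewrite Ht Hc.
  have [a' Hx] : exists a', x n = inl a' by case: (x n) Ha => [a'|] // _; exists a'.
  exists 0%N; exists n; exists a'; split; rewrite ?eqxx ?orbT //.
  by move=> j /orP [] /eqP ->; [left|right].
have Hl : x n = inr ck by rewrite -[n]/((size vs).-1) nth_last.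
have Ha : isA v0 by move: Ht; rewrite Hl; case: (isA v0).
have [a' Hv] : exists a', v0 = inl a' by case: (v0) Ha => [a'|] // _; exists a'.
exists n; exists 0%N; exists a'; split; rewrite ?eqxx ?orbT //.
by move=> j /orP [] /eqP ->; [right|left].
Qed.

Lemma compE u w : u \in vs -> edge_in E u w -> w \in vs.
Proof.
move=> Hu He; case/orP: (compo hrho Hu He) => /inzip_mem /andP [] //.
Qed.

Lemma vsN a : inl a \in vs -> exists c, (a, c) \in Ni.
Proof.
case/(memP v0 p) => j Hj Ex.
have [w HN _] := hasN hrho halt hstart hend Hj.
rewrite -Ex in HN; have [c _ Hc] := edge_inl HN; by exists c.
Qed.

Definition bnew (a : A) : option C :=
  if inl a \in vs then (if N a is Some (c, _) then Some c else None)
  else day_matching M i a.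

Lemma bnewP a c : (bnew a == Some c) = if inl a \in vs then (a, c) \in Ni else (a, c) \in Mi.
Proof.
rewrite /bnew; case: ifP => Hin; last by rewrite dmP inMi.
have [c0] := vsN Hin; rewrite inNi => /andP [HX /eqP HN].
rewrite inNi HX HN /=; by apply/eqP/eqP => [[->]|[->]].
Qed.

Lemma bnew_some a : inl a \in vs -> bnew a != None.
Proof.
move=> Hin; have [c0] := vsN Hin; rewrite inNi => /andP [_ /eqP HN].
by rewrite /bnew Hin HN.
Qed.


Definition memE (S : {set A * C}) a c := (a, c) \in S.

Lemma Eedge a c : ((a, c) \in Mi) != ((a, c) \in Ni) -> (a, c) \in E.
Proof. by rewrite inE2. Qed.

Lemma notend j c : (j <= n)%N -> x j = inr c -> c != ck -> (0 < j < n)%N.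
Proof.
move=> Hj Ex Hc.
have [jk [jo [a' [Hjk Hjo Ek Eo Hend]]]] := ends.
case Hb: ((j == 0%N) || (j == n)).
  case: (Hend j Hb) => Ej; subst j.
    by move: Ek; rewrite Ex => [[Ec]]; move: Hc; rewrite Ec eqxx.
  by move: Eo; rewrite Ex.
move/norP: Hb => [H0 Hn]; by rewrite lt0n H0 ltn_neqAle Hn Hj.
Qed.

Lemma cnt_other c : c != ck ->
  (#|[set a | bnew a == Some c]| <= #|[set a | memE Mi a c]|)%N.
Proof.
move=> Hck.
case Hc: (inr c \in vs); last first.
  apply: subset_leq_card; apply/subsetP => a; rewrite !inE bnewP /memE.
  case: ifP => // Hin H; apply/negPn/negP => HM.
  have HE : edge_in E (inl a) (inr c) by rewrite /= Eedge // H (negbTE HM).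
  by have := compE Hin HE; rewrite Hc.
case/(memP v0 p): Hc => j Hj Ex.
have Hint := notend Hj (esym Ex) Hck.
have [wN [wM [HNN HNE HME HMN HMv] Huniq]] := interior hrho halt hstart Hint.
rewrite -Ex in HNN HNE HME HMN Huniq.
have [aN EwN _] := edge_inr HNN.
have [aM EwM HaM] := edge_inr HME.
subst wN wM.
have HaMi : (aM, c) \in Mi by move: HaM HMN; rewrite inE2 /=; case: ((aM, c) \in Mi); case: ((aM, c) \in Ni).
rewrite (cardsD1 aM [set a | memE Mi a c]) inE /memE HaMi add1n.
apply: leq_trans (_ : (#|([set a | memE Mi a c] :\ aM) :|: [set aN]| <= _)%N).
  apply: subset_leq_card; apply/subsetP => a; rewrite !inE bnewP /memE.
  case: ifP => Hin H.
    case HM: ((a, c) \in Mi).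
      apply/orP; left; rewrite andbT; apply/eqP => Ea; subst a.
      by move: HMN; rewrite /= H.
    have HE : edge_in E (inr c) (inl a) by rewrite /= Eedge // H HM.
    by case: (Huniq _ HE H) => ->; rewrite eqxx orbT.
  apply/orP; left; rewrite H andbT; apply/eqP => Ea; subst a.
  by move: HMv; rewrite Hin.
by apply: leq_trans (leq_card_setU _ _) _; rewrite cards1 addn1.
Qed.


Lemma cardMi c : #|[set a | memE Mi a c]| = #|[set a | day_matching M i a == Some c]|.
Proof. by apply: eq_card => a; rewrite !inE /memE inMi dmP. Qed.

Section Ends.
Variables (jk jo : nat) (a' : A).
Hypotheses (Hjk : (jk == 0%N) || (jk == n)) (Hjo : (jo == 0%N) || (jo == n))
  (Ek : x jk = inr ck) (Eo : x jo = inl a')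
  (Hend : forall j, (j == 0%N) || (j == n) -> j = jk \/ j = jo).

Lemma le_n j : (j == 0%N) || (j == n) -> (j <= n)%N.
Proof. by case/orP => /eqP ->. Qed.

Lemma ck_in : inr ck \in vs.
Proof. by rewrite -Ek mem_nth //= ltnS le_n. Qed.

Lemma a'_in : inl a' \in vs.
Proof. by rewrite -Eo mem_nth //= ltnS le_n. Qed.

Lemma agent_M a : inl a \in vs -> a != a' -> exists c, (a, c) \in Mi.
Proof.
case/(memP v0 p) => j Hj Ex Ha.
have Hint : (0 < j < n)%N.
  case Hb: ((j == 0%N) || (j == n)).
    case: (Hend Hb) => Ej; subst j; first by move: Ek; rewrite -Ex.
    by move: Eo; rewrite -Ex => [[Ea]]; move: Ha; rewrite Ea eqxx.
  move/norP: Hb => [H0 Hn]; by rewrite lt0n H0 ltn_neqAle Hn Hj.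
have [wN [wM [_ _ HME HMN _] _]] := interior hrho halt hstart Hint.
rewrite -Ex in HME HMN.
have [c Ew HaE] := edge_inl HME; subst wM.
exists c; move: HaE HMN; rewrite inE2 /=; by case: ((a, c) \in Mi); case: ((a, c) \in Ni).
Qed.

Lemma a'_noM c : (a', c) \notin Mi.
Proof.
have [w [HwN HwE Hu]] := endpt hrho halt hstart hend Hjo.
rewrite Eo in HwN HwE Hu.
have [c0 Ew HN0] := edge_inl HwN; subst w.
have HM0 : (a', c0) \notin Mi.
  by move: HwE; rewrite /= inE2 HN0; case: (_ \in Mi).
apply/negP => HM.
case HN: ((a', c) \in Ni).
  move: HN HN0; rewrite !inNi => /andP [_ /eqP ->] /andP [_ /eqP [Ec]].
  by move: HM0; rewrite -Ec HM.
have HE : edge_in E (inl a') (inr c) by rewrite /= Eedge // HM HN.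
by case: (Hu _ HE) => Ec; move: HM0; rewrite -Ec HM.
Qed.

Lemma cnt_ck1 :
  (#|[set a | bnew a == Some ck]| <= (#|[set a | memE Mi a ck]|).+1)%N.
Proof.
have [w [HwN HwE Hu]] := endpt hrho halt hstart hend Hjk.
rewrite Ek in HwN HwE Hu.
have [a1 Ew _] := edge_inr HwN; subst w.
apply: leq_trans (_ : (#|[set a | memE Mi a ck] :|: [set a1]| <= _)%N); last first.
  by apply: leq_trans (leq_card_setU _ _) _; rewrite cards1 addn1.
apply: subset_leq_card; apply/subsetP => a; rewrite !inE bnewP /memE.
case: ifP => Hin H; last by rewrite H.
case HM: ((a, ck) \in Mi) => //=.
have HE : edge_in E (inr ck) (inl a) by rewrite /= Eedge // H HM.
by case: (Hu _ HE) => ->; rewrite eqxx.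
Qed.

Lemma cnt_ck2 : (#|[set a | bnew a == Some ck]| <= qd i ck)%N.
Proof.
apply: leq_trans (_ : (#|[set a | N a == Some (ck, i)]| <= _)%N); last first.
  by case: hN => [[_ H _ _] _]; exact: H.
apply: subset_leq_card; apply/subsetP => a; rewrite !inE bnewP.
case: ifP => Hin H; first by move: H; rewrite inNi => /andP [].
case HN: ((a, ck) \in Ni); first by move: HN; rewrite inNi => /andP [].
have HE : edge_in E (inr ck) (inl a) by rewrite /= Eedge // H HN.
by have := compE ck_in HE; rewrite Hin.
Qed.

Lemma supply : (#|[set a | bnew a != None]| <= s i)%N.
Proof.
apply: leq_trans (_ : (#|[set a | day_matching M i a != None] :|: [set a']| <= _)%N).
  apply: subset_leq_card; apply/subsetP => a; rewrite !inE.
  case Hin: (inl a \in vs); last by rewrite /bnew Hin => ->.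
  case: (a =P a') => [-> _|/eqP Ha _]; first by rewrite orbT.
  have [c Hc] := agent_M Hin Ha.
  apply/orP; left; apply/negP => /eqP Hd.
  by move: Hc; rewrite inMi -dmP Hd.
apply: leq_trans (leq_card_setU _ _) _; rewrite cards1 dmY.
apply: leq_trans (_ : (#|Xset M N i| <= _)%N).
  by rewrite hXY leq_add2l.
apply: leq_trans (_ : (#|[set a | [exists c, N a == Some (c, i)]]| <= _)%N).
  by apply: subset_leq_card; apply/subsetP => a; rewrite !inE => /andP [].
by case: hN => [[_ _ H _] _]; exact: H.
Qed.

Lemma feas (Hlt : (#|[set a | memE Mi a ck]| < remaining q M i ck)%N) :
  feasible_bmatching elig avail s qd q M i bnew.
Proof.
split.
- move=> a c Hb; have := bnewP a c; rewrite Hb eqxx => /esym.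
  case: ifP => Hin H; last first.
    have Hb' : day_matching M i a = Some c by rewrite /bnew Hin in Hb.
    by have [[H1 _ _] _] := hM i; exact: H1.
  move: H; rewrite inNi => /andP [HX /eqP HN].
  have [[Hv _ _ _] _] := hN.
  have /andP [He Ha] := Hv _ _ _ HN.
  rewrite He andbT inE Ha /=.
  apply/existsP => [[c' /existsP [d /andP [Hd HM]]]].
  move: HX; rewrite inE => /andP [_ /negP]; apply.
  apply/existsP; exists c; apply/existsP; exists i; apply/existsP; exists c'.
  apply/existsP; exists d; by rewrite HN eqxx HM Hd.
- move=> c; case: (c =P ck) => [->|/eqP Hc].
    by rewrite leq_min cnt_ck2 /=; apply: leq_trans cnt_ck1 _.
  apply: leq_trans (cnt_other Hc) _; rewrite cardMi.
  by have [[_ H2 _] _] := hM i; exact: H2.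
- exact: supply.
Qed.

Lemma weight_lt : bm_weight alpha delta i (day_matching M i) < bm_weight alpha delta i bnew.
Proof.
have Hd : day_matching M i a' = None.
  case Hd: (day_matching M i a') => [c|] //.
  by have := a'_noM c; rewrite inMi -dmP Hd eqxx.
have Hb : bnew a' != None := bnew_some a'_in.
have dpos : 0 < delta ^+ i by rewrite exprn_gt0 //; case/andP: hdelta.
rewrite /bm_weight (bigD1 a') //= [X in _ < X](bigD1 a') //= Hd add0r.
case: (bnew a') Hb => [c|] // _.
rewrite -[X in X < _]add0r; apply: ltr_leD; first by rewrite mulr_gt0.
apply: ler_sum => a _.
have Himp : day_matching M i a != None -> bnew a != None.
  case Hin: (inl a \in vs); first by move=> _; exact: bnew_some.
  by rewrite /bnew Hin.
move: Himp; case: (day_matching M i a) => [c1|]; case: (bnew a) => [c2|] //= H.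
- by have := H isT.
- by rewrite ltW // mulr_gt0.
Qed.

Lemma key : ~~ (#|[set a | memE Mi a ck]| < remaining q M i ck)%N.
Proof.
apply/negP => Hlt.
have := (hM i).2 _ (feas Hlt).
by rewrite leNgt weight_lt.
Qed.

End Ends.

Lemma key' : (remaining q M i ck <= #|[set a | memE Mi a ck]|)%N.
Proof.
have [jk [jo [a' [Hjk Hjo Ek Eo Hend]]]] := ends.
by rewrite leqNgt (key Hjk Hjo Ek Eo Hend).
Qed.

End Main.

Unset Implicit Arguments.

Theorem lemma4 (A C : finType) (T : nat)
  (elig : A -> C -> bool) (avail : A -> 'I_T -> bool)
  (s : 'I_T -> nat) (qd : 'I_T -> C -> nat) (q : C -> nat)
  (R : realFieldType) (alpha : A -> R) (delta : R)
  (halpha : forall a, 0 < alpha a) (hdelta : 0 < delta < 1)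
  (M N : allocation A C T)
  (hM : greedy_output elig avail s qd q alpha delta M)
  (hN : optimal_alloc elig avail s qd q alpha delta N)
  (i : 'I_T) (z : nat) (hz : (0 < z)%N)
  (hXY : #|Xset M N i| = (#|Yset M i| + z)%N)
  (v0 : A + C) (p : seq (A + C))
  (hrho : path_component (symdiff (Medges M i) (Nedges M N i)) v0 p)
  (halt : alternating (Nedges M N i) v0 p)
  (hstart : edge_in (Nedges M N i) v0 (head v0 p))
  (hend : edge_in (Nedges M N i) (last v0 (belast v0 p)) (last v0 p))
  (ck : C) (hck : (v0 == inr ck) || (last v0 p == inr ck)) :
  #|[set a | [exists d : 'I_T, (d <= i)%N && (M a == Some (ck, d))]]| = q ck.
Proof.
have Hk := key' halpha hdelta hM hN hz hXY hrho halt hstart hend hck.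
have -> : #|[set a | [exists d : 'I_T, (d <= i)%N && (M a == Some (ck, d))]]|
   = ubn M i.+1 ck by [].
rewrite ubn_step.
have Hu : (ubn M i ck <= q ck)%N := ubn_le hM ck (ltnW (ltn_ord i)).
have [[_ H2 _] _] := hM i.
have Hc := leq_trans (H2 ck) (geq_minr _ _).
rewrite dmset in Hc.
rewrite cardMi dmset in Hk.
rewrite /remaining /used_before -/(ubn M i ck) in Hc Hk.
apply/eqP; rewrite eqn_leq; apply/andP; split.
  by rewrite -(leq_add2l (ubn M i ck)) (subnKC Hu) in Hc.
by rewrite -leq_subLR.
Qed.
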